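(* Let $V$ be a vertex operator algebra and $m$ a positive integer. Then $$A_{m,0}(V)*_{m,0}^mA_{0,m}(V)\cong O_{m-1}(V)/O_m(V),$$ where the left side denotes the linear span in $A_m(V)$ of all $a*_{m,0}^mb$ with $a\in A_{m,0}(V)$, $b\in A_{0,m}(V)$.
   Context: Let $V=\bigoplus_nV_n$ be a vertex operator algebra. For homogeneous $u,v\in V$ and $m,n,p\in\mathbb Z_{\ge0}$ put $u*_{m,p}^nv=\sum_{i=0}^p(-1)^i\binom{m+n-p+i}{i}\mathrm{Res}_z\frac{(1+z)^{\mathrm{wt}\,u+m}}{z^{m+n-p+i+1}}Y(u,z)v$, $u*_m^nv=u*_{m,m}^nv$, $u\circ_m^nv=\mathrm{Res}_z\frac{(1+z)^{\mathrm{wt}\,u+m}}{z^{n+m+2}}Y(u,z)v$. $O'_{n,m}(V)$ = span of all $u\circ_m^nv$ and $L(-1)u+(L(0)+m-n)u$; $O_n(V)=O'_{n,n}(V)$ (so $O_n(V)$ is spanned by $\mathrm{Res}_zY(u,z)v\frac{(1+z)^{\mathrm{wt}\,u+n}}{z^{2n+2}}$ and $L(-1)u+L(0)u$, and $O_m(V)\subseteq O_{m-1}(V)$); $O''_{n,m}(V)$ = span of $u*_{m,p_3}^n((a*_{p_1,p_2}^{p_3}b)*_{m,p_1}^{p_3}c-a*_{m,p_2}^{p_3}(b*_{m,p_1}^{p_2}c))$; $O'''_{n,m}(V)=\sum_p(V*_p^nO_p(V))*_{m,p}^nV$; $A_{n,m}(V)=V/(O'_{n,m}+O''_{n,m}+O'''_{n,m})$.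 $A_m(V)=A_{m,m}(V)=V/O_m(V)$ is an associative algebra and $*_{m,0}^m$ induces a bilinear map $A_{m,0}(V)\times A_{0,m}(V)\to A_m(V)$. *)

(* Defs.v *)
From mathcomp Require Import all_boot all_order all_algebra.
Set Implicit Arguments. Unset Strict Implicit. Unset Printing Implicit Defensive.
Import Order.TTheory GRing.Theory Num.Theory.
Local Open Scope ring_scope.

Section VOADefs.
Variables (K : fieldType) (V : lmodType K).

Definition binz (a : int) (i : nat) : K :=
  (\prod_(j < i) (a - j%:Z)%:~R) / (i`!)%:R.

Definition lspan (S : V -> Prop) (x : V) : Prop :=
  exists s : seq (K * V), (forall p, p \in s -> S p.2) /\
                          x = \sum_(p <- s) p.1 *: p.2.

Variables (Y : int -> V -> V -> V)   (* Y n u v = u_n v, Y(u,z) = sum u_n z^{-n-1} *)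
          (vac omega : V) (c : K)
          (trunc : V -> V -> nat).    (* a truncation bound: u_n v = 0 for n >= trunc u v *)

Definition Lop (n : int) (v : V) : V := Y (n + 1) omega v.

Definition homog (n : int) (v : V) : Prop := Lop 0 v = n%:~R *: v.

Record is_VOA : Prop := {
  voa_char0 : forall n : nat, (n.+1)%:R != 0 :> K;
  voa_linl : forall n (a : K) u u' v, Y n (a *: u + u') v = a *: Y n u v + Y n u' v;
  voa_linr : forall n (a : K) u v v', Y n u (a *: v + v') = a *: Y n u v + Y n u v';
  voa_trunc : forall u v (n : int), (trunc u v)%:Z <= n -> Y n u v = 0;
  voa_graded : forall v, exists s : seq (int * V),
      (forall p, p \in s -> homog p.1 p.2) /\ v = \sum_(p <- s) p.2;
  voa_fin_dim : forall n : int, exists s : seq V,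
      forall v, homog n v -> lspan (fun w => w \in s) v;
  voa_bounded : exists N : int, forall n v, n < N -> homog n v -> v = 0;
  voa_vac_wt : homog 0 vac;
  voa_omega_wt : homog 2 omega;
  voa_vacuum : forall n v, Y n vac v = (if n == -1 then v else 0);
  voa_creation : forall u, Y (-1) u vac = u;
  voa_creation0 : forall u (n : nat), Y n%:Z u vac = 0;
  voa_jacobi : forall (p q r : int) u v w,
      \sum_(i < trunc u v + `|p|) binz q i *: Y (q + r - i%:Z) (Y (p + i%:Z) u v) w =
      \sum_(i < trunc v w + `|r|)
          ((-1) ^+ i * binz p i) *: Y (p + q - i%:Z) u (Y (r + i%:Z) v w)
      - \sum_(i < trunc u w + `|q|)
          ((-1) ^+ i * binz p i * (-1) ^ p) *: Y (p + r - i%:Z) v (Y (q + i%:Z) u w);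
  voa_virasoro : forall (a b : int) v,
      Lop a (Lop b v) - Lop b (Lop a v) =
      (a - b)%:~R *: Lop (a + b) v
      + (if a + b == 0 then ((a ^+ 3 - a)%:~R / 12%:R) * c else 0) *: v;
  (* L(-1)-derivative property: Y(L(-1)u, z) = d/dz Y(u, z) *)
  voa_deriv : forall (n : int) u v, Y n (Lop (-1) u) v = - (n%:~R *: Y (n - 1) u v)
}.

(* Res_z (1+z)^N z^{-e} Y(u,z) v = sum_{j >= 0} binom(N,j) u_{j-e} v  (finite sum) *)
Definition res (N : int) (e : nat) (u v : V) : V :=
  \sum_(j < trunc u v + e) binz N j *: Y (j%:Z - e%:Z) u v.

(* u *_{m,p}^n v for u homogeneous of weight wt *)
Definition star (m p n : nat) (wt : int) (u v : V) : V :=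
  \sum_(i < p.+1) ((-1) ^+ i * binz (m%:Z + n%:Z - p%:Z + i%:Z) i)
       *: res (wt + m%:Z) (m + n - p + i).+1 u v.

(* u o_m^n v for u homogeneous of weight wt *)
Definition circ (m n : nat) (wt : int) (u v : V) : V :=
  res (wt + m%:Z) (n + m).+2 u v.

Definition O_gen (n : nat) (x : V) : Prop :=
  (exists wt u v, homog wt u /\ x = circ n n wt u v)
  \/ (exists u, x = Lop (-1) u + Lop 0 u).

Definition Oset (n : nat) : V -> Prop := lspan (O_gen n).

End VOADefs.

(* Main.v *)
Require Import Defs.
From mathcomp Require Import all_boot all_order all_algebra.
From mathcomp Require Import ring zify.
Set Implicit Arguments. Unset Strict Implicit. Unset Printing Implicit Defensive.
Import Order.TTheory GRing.Theory Num.Theory.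
Local Open Scope ring_scope.

Section Binz.
Variable K : fieldType.
Hypothesis hc : forall n : nat, (n.+1)%:R != 0 :> K.

Lemma fact_nz (i : nat) : (i`!)%:R != 0 :> K.
Proof. by have := fact_gt0 i; case: (i`!) => // n _; apply: hc. Qed.

Lemma binz0 (a : int) : binz K a 0 = 1.
Proof. by rewrite /binz big_ord0 fact0 divr1. Qed.

Lemma binzS (a : int) (i : nat) :
  binz K a i.+1 = a%:~R / (i.+1)%:R * binz K (a - 1) i.
Proof.
rewrite /binz big_ord_recl /= subr0 factS natrM invfM.
have -> : \prod_(j < i) (a - (bump 0 j)%:Z)%:~R = \prod_(j < i) (a - 1 - j%:Z)%:~R :> K.
  by apply: eq_bigr => j _; congr (_%:~R); rewrite /bump /= add1n -addn1 PoszD; ring.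
by rewrite !mulrA; congr (_ * _); rewrite mulrAC.
Qed.

Lemma binzSr (a : int) (i : nat) :
  binz K a i.+1 = binz K a i * (a - i%:Z)%:~R / (i.+1)%:R.
Proof.
rewrite /binz big_ord_recr /= factS natrM invfM.
ring.
Qed.

Lemma binz_pascal (a : int) (i : nat) :
  binz K (a + 1) i.+1 = binz K a i.+1 + binz K a i.
Proof.
rewrite binzS binzSr addrK.
have := hc i; move: (binz K a i) => b hi.
rewrite intrD rmorphB /=. field. by rewrite addrC natr1.
Qed.

Lemma binz_neg1 (i : nat) : binz K (-1) i = (-1) ^+ i.
Proof.
elim: i => [|i IH]; first by rewrite binz0.
rewrite binzSr IH rmorphB /= exprS.
have := hc i. move=> hi. field. by rewrite addrC natr1.
Qed.

Lemma binz_0 (i : nat) : binz K 0 i.+1 = 0.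
Proof. by rewrite binzS mul0r mul0r. Qed.

Lemma binz_1 (i : nat) : binz K 1 i.+2 = 0.
Proof. by rewrite binzS binz_0 mulr0. Qed.

Lemma binz_11 : binz K 1 1 = 1.
Proof. rewrite binzS binz0 mulr1. by rewrite divr1. Qed.

Lemma binz_upper_neg (c : int) (i : nat) :
  (-1) ^+ i * binz K (- (c - i%:Z)) i = binz K (c - 1) i.
Proof.
elim: i => [|i IH]; first by rewrite !binz0 mulr1.
rewrite binzS binzSr -IH.
have -> : - (c - i.+1%:Z) - 1 = - (c - i%:Z) by rewrite -addn1 PoszD; ring.
move: (binz K (- (c - i%:Z)) i) => b.
rewrite exprS !rmorphB /= !rmorphN /= -addn1 natrD !rmorphD /=.
have := hc i; rewrite -addn1 natrD => hi. field. exact: hi.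
Qed.

Definition vf (B N : int) (s : nat) : K :=
  \sum_(j < s.+1) (-1)^+j * binz K B j * binz K (N - j%:Z) (s - j).
Lemma vf0 B N : vf B N 0 = 1.
Proof. by rewrite /vf big_ord1 /= !binz0 !mulr1. Qed.
Lemma vf_rec B N s : vf (B + 1) N s.+1 = vf B N s.+1 - vf B (N - 1) s.
Proof.
rewrite /vf big_ord_recl [X in _ = X - _]big_ord_recl /= !binz0 subr0.
rewrite -addrA; congr (_ + _).
rewrite -sumrB; apply: eq_bigr => i _.
rewrite /bump leq0n add1n binz_pascal //.
have -> : N - (i.+1)%:Z = N - 1 - i%:Z by rewrite -addn1 PoszD; ring.
rewrite subSS exprS; ring.
Qed.

Lemma vf_up B : (forall N s, vf B N s = binz K (N - B) s) ->
  forall N s, vf (B + 1) N s = binz K (N - (B + 1)) s.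
Proof.
move=> IH N [|s]; first by rewrite vf0 binz0.
rewrite vf_rec // !IH.
have -> : N - B = (N - (B + 1)) + 1 by ring.
rewrite binz_pascal //.
have -> : N - 1 - B = N - (B + 1) by ring.
by rewrite addrK.
Qed.
Lemma vf_down B : (forall N s, vf (B + 1) N s = binz K (N - (B + 1)) s) ->
  forall N s, vf B N s = binz K (N - B) s.
Proof.
move=> IH N s; elim: s N => [|s IHs] N; first by rewrite vf0 binz0.
have := vf_rec B N s; rewrite IH IHs => /(congr1 (fun t => t + binz K (N - 1 - B) s)); rewrite subrK => <-.
have -> : N - B = (N - (B + 1)) + 1 by ring.
rewrite binz_pascal //.
have -> : N - 1 - B = N - (B + 1) by ring.
by [].
Qed.
Lemma vand B N s : vf B N s = binz K (N - B) s.
Proof.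
have P0 : forall N s, vf 0 N s = binz K (N - 0) s.
  move=> N' s'; rewrite /vf big_ord_recl big1 ?addr0.
    by rewrite /= ?subr0 ?subn0 binz0 ?mulr1 ?expr0 ?mul1r.
  by move=> i _; rewrite lift0 binz_0 // mulr0 mul0r.
have Pp : forall n : nat, forall N s, vf n%:Z N s = binz K (N - n%:Z) s.
  elim=> [|n IHn]; first exact: P0.
  by move=> N' s'; rewrite -addn1 PoszD; apply: vf_up.
case: B => [n|n]; first exact: Pp.
elim: n N s => [|n IHn] N s.
  apply: vf_down => N' s'. by have -> : Negz 0 + 1 = 0 by []; apply: P0.
apply: vf_down => N' s'.
have -> : Negz n.+1 + 1 = Negz n by rewrite !NegzE; ring.
exact: IHn.
Qed.


End Binz.


Lemma bump0 i : bump 0 i = i.+1.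
Proof. by rewrite /bump leq0n add1n. Qed.

Section Gen.
Variables (K : fieldType) (V : lmodType K).
Implicit Types (S T : V -> Prop).

Lemma lspan0 S : lspan S 0.
Proof. by exists [::]; rewrite big_nil. Qed.

Lemma lspan_gen S x : S x -> lspan S x.
Proof.
move=> Sx; exists [:: (1, x)]; split; last by rewrite big_seq1 scale1r.
by move=> p; rewrite inE => /eqP ->.
Qed.

Lemma lspanD S x y : lspan S x -> lspan S y -> lspan S (x + y).
Proof.
move=> [s1 [h1 ->]] [s2 [h2 ->]]; exists (s1 ++ s2); split; last by rewrite big_cat.
by move=> p; rewrite mem_cat => /orP [] ?; [apply: h1|apply: h2].
Qed.

Lemma lspanZ S a x : lspan S x -> lspan S (a *: x).
Proof.
move=> [s [h ->]]; exists [seq (a * p.1, p.2) | p <- s]; split.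
  by move=> p /mapP [q qs ->] /=; apply: h.
by rewrite big_map scaler_sumr; apply: eq_bigr => p _ /=; rewrite scalerA.
Qed.

Lemma lspanN S x : lspan S x -> lspan S (- x).
Proof. by move=> h; rewrite -scaleN1r; apply: lspanZ. Qed.

Lemma lspanB S x y : lspan S x -> lspan S y -> lspan S (x - y).
Proof. by move=> hx hy; apply: lspanD => //; apply: lspanN. Qed.

Lemma lspan_sum S (I : Type) (r : seq I) (F : I -> V) :
  (forall i, lspan S (F i)) -> lspan S (\sum_(i <- r) F i).
Proof.
move=> h; elim: r => [|i r IH]; first by rewrite big_nil; apply: lspan0.
by rewrite big_cons; apply: lspanD.
Qed.

Lemma lspan_sum_in S (I : eqType) (r : seq I) (F : I -> V) :
  (forall i, i \in r -> lspan S (F i)) -> lspan S (\sum_(i <- r) F i).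
Proof.
elim: r => [|i r IH] h; first by rewrite big_nil; apply: lspan0.
rewrite big_cons; apply: lspanD; first by apply: h; rewrite inE eqxx.
by apply: IH => j jr; apply: h; rewrite inE jr orbT.
Qed.

Lemma lspan_idem S T x : (forall y, S y -> lspan T y) -> lspan S x -> lspan T x.
Proof.
move=> h [s [hs ->]]; elim: s hs => [|p s IH] hs; first by rewrite big_nil; apply: lspan0.
rewrite big_cons; apply: lspanD; first by apply: lspanZ; apply: h; apply: hs; rewrite inE eqxx.
by apply: IH => q qs; apply: hs; rewrite inE qs orbT.
Qed.

Lemma lspan_mono S T x : (forall y, S y -> T y) -> lspan S x -> lspan T x.
Proof. by move=> h; apply: lspan_idem => y /h; apply: lspan_gen. Qed.

Lemma sum_ext (F : nat -> V) n M : (n <= M)%N -> (forall j, (n <= j)%N -> F j = 0) ->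
  \sum_(j < n) F j = \sum_(j < M) F j.
Proof.
move=> nM h; rewrite -(subnKC nM) big_split_ord /= [X in _ = _ + X]big1 ?addr0 //.
by move=> j _; apply: h; rewrite leq_addr.
Qed.

Lemma sum_ext2 (F : nat -> V) t n M : (t <= n)%N -> (t <= M)%N ->
  (forall j, (t <= j)%N -> F j = 0) ->
  \sum_(j < n) F j = \sum_(j < M) F j.
Proof. by move=> tn tM h; rewrite -(sum_ext tn h) (sum_ext tM h). Qed.

Lemma triangle (F : nat -> nat -> V) M :
  \sum_(s < M) \sum_(j < s.+1) F j (s - j)%N = \sum_(j < M) \sum_(i < M - j) F j i.
Proof.
elim: M => [|M IH]; first by rewrite !big_ord0.
rewrite big_ord_recr /= IH [RHS]big_ord_recr /= subSnn big_ord1.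
rewrite [in RHS](eq_bigr (fun j : 'I_M => \sum_(i < M - j) F j i + F j (M - j)%N)); last first.
  by move=> j _; rewrite subSn ?big_ord_recr //; apply: ltnW.
rewrite big_split /= -!addrA; congr (_ + _).
by rewrite big_ord_recr /= subnn.
Qed.

End Gen.


Section VOA.
Variables (K : fieldType) (V : lmodType K) (Y : int -> V -> V -> V)
          (vac omega : V) (c : K) (trunc : V -> V -> nat).
Hypothesis HV : is_VOA Y vac omega c trunc.

Local Notation hom := (homog Y omega).
Local Notation L := (Lop Y omega).
Local Notation res := (res Y trunc).

Lemma hc : forall n : nat, (n.+1)%:R != 0 :> K.
Proof. exact: voa_char0 HV. Qed.

Lemma Yl0 n w : Y n 0 w = 0.
Proof.
have := voa_linl HV n (-1) 0 0 w; by rewrite scaler0 addr0 scaleN1r addNr.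
Qed.
Lemma Yr0 n u : Y n u 0 = 0.
Proof.
have := voa_linr HV n (-1) u 0 0; by rewrite scaler0 addr0 scaleN1r addNr.
Qed.
Lemma YlD n u u' w : Y n (u + u') w = Y n u w + Y n u' w.
Proof. by have := voa_linl HV n 1 u u' w; rewrite !scale1r. Qed.
Lemma YrD n u w w' : Y n u (w + w') = Y n u w + Y n u w'.
Proof. by have := voa_linr HV n 1 u w w'; rewrite !scale1r. Qed.
Lemma YlZ n a u w : Y n (a *: u) w = a *: Y n u w.
Proof. by have := voa_linl HV n a u 0 w; rewrite !addr0 Yl0 addr0. Qed.
Lemma YrZ n a u w : Y n u (a *: w) = a *: Y n u w.
Proof. by have := voa_linr HV n a u w 0; rewrite !addr0 Yr0 addr0. Qed.

Lemma L0E x : L 0 x = Y 1 omega x.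
Proof. by rewrite /Lop add0r. Qed.
Lemma LN1E x : L (-1) x = Y 0 omega x.
Proof. by rewrite /Lop addNr. Qed.
Lemma L0Z a x : L 0 (a *: x) = a *: L 0 x.
Proof. by rewrite !L0E YrZ. Qed.

Lemma ztrunc u v (n : int) : (trunc u v)%:Z <= n -> Y n u v = 0.
Proof. move=> h; exact: (voa_trunc HV h). Qed.

Lemma abs_le (t i : nat) (j : int) : (t + `|j| <= i)%N -> t%:Z <= j + i%:Z.
Proof. by case: j => [j|j] /=; rewrite ?NegzE; lia. Qed.

Lemma homog_Y a b u v (j : int) : hom a u -> hom b v -> hom (a + b - j - 1) (Y j u v).
Proof.
move=> hu hv.
have J := voa_jacobi HV 0 1 j omega u v.
rewrite (@sum_ext _ _ (fun i : nat => binz K 1 i *: Y (1 + j - i%:Z) (Y (0 + i%:Z) omega u) v)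
   _ (trunc omega u + `|0|).+2) in J; last first.
  - move=> i hi; rewrite add0r (@ztrunc omega u) ?Yl0 ?scaler0 ?Yl0 //.
    by rewrite lez_nat; move: hi; rewrite addn0.
  - by rewrite addn0; lia.
rewrite 2!big_ord_recl big1 in J; last first.
  by move=> i _; rewrite !lift0 binz_1 ?scale0r //; apply: hc.
rewrite (@sum_ext _ _ (fun i : nat => ((-1) ^+ i * binz K 0 i) *: Y (0 + 1 - i%:Z) omega (Y (j + i%:Z) u v))
   _ (trunc u v + `|j|).+1) in J; last first.
  - move=> i hi; rewrite (@ztrunc u v) ?Yr0 ?scaler0 //; apply: abs_le; lia.
  - by [].
rewrite big_ord_recl big1 in J; last first.
  by move=> i _; rewrite lift0 binz_0 ?mulr0 ?scale0r //; apply: hc.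
rewrite (_ : (trunc omega v + `|1|)%N = (trunc omega v).+1) ?addn1 // in J.
rewrite big_ord_recl big1 in J; last first.
  by move=> i _; rewrite lift0 binz_0 ?mulr0 ?mul0r ?scale0r //; apply: hc.
rewrite /= /bump /= !binz0 ?binz_11 !scale1r !addr0 !expr0 !mul1r expr0z !scale1r addn0 !add0r in J.
have e1 : 1 + j - Posz 1 = j by rewrite addrC addKr.
rewrite e1 in J.
rewrite -!L0E -LN1E hu hv YlZ YrZ (voa_deriv HV) in J.
rewrite (_ : 1 + j - 1 = j) in J; last by ring.
move/eqP: J; rewrite eq_sym subr_eq => /eqP.
rewrite /homog => ->.
rewrite -scaleNr -!scalerDl; congr (_ *: _); ring.
Qed.


Lemma homLN1 k x : hom k x -> hom (k + 1) (L (-1) x).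
Proof.
move=> hx; rewrite LN1E.
have := @homog_Y _ _ _ _ 0 (voa_omega_wt HV) hx.
by rewrite (_ : 2 + k - 0 - 1 = k + 1) //; ring.
Qed.

Lemma res_ext N e u v M : (trunc u v + e <= M)%N ->
  res N e u v = \sum_(j < M) binz K N j *: Y (j%:Z - e%:Z) u v.
Proof.
move=> hM; rewrite /Defs.res (@sum_ext _ _ (fun j : nat => binz K N j *: Y (j%:Z - e%:Z) u v) _ M) //.
by move=> j hj; rewrite ztrunc ?scaler0 //; lia.
Qed.

Lemma res_pascal N e u v : res (N + 1) e.+1 u v = res N e.+1 u v + res N e u v.
Proof.
set M := (trunc u v + e)%N.
rewrite (@res_ext N e u v M) // (@res_ext (N+1) e.+1 u v M.+1) ?(@res_ext N e.+1 u v M.+1) ?addnS //.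
rewrite [LHS]big_ord_recl [X in _ = X + _]big_ord_recl /= !binz0 -addrA -big_split /=.
congr (_ + _); apply: eq_bigr => i _; rewrite bump0 binz_pascal ?scalerDl; last exact: hc.
by rewrite (_ : (i.+1)%:Z - (e.+1)%:Z = i%:Z - e%:Z) //; lia.
Qed.

Lemma res_deriv N e u v : res (N + 1) e (L (-1) u) v =
  - (N + 1)%:~R *: res N e u v + e%:R *: res (N + 1) e.+1 u v.
Proof.
set M := (trunc u v + trunc (L (-1) u) v + e)%N.
rewrite (@res_ext _ _ _ _ M.+1) ?(@res_ext N e _ _ M) ?(@res_ext _ e.+1 _ _ M.+1); try lia.
rewrite (eq_bigr (fun j : 'I_M.+1 => (binz K (N + 1) j * (e%:R - j%:R)) *: Y (j%:Z - e%:Z - 1) u v)); last first.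
  by move=> j _; rewrite (voa_deriv HV) scalerN -scaleNr scalerA; congr (_ *: _); rewrite rmorphB /=; ring.
rewrite [LHS]big_ord_recl [in RHS]big_ord_recl /= !binz0 scalerDr !scaler_sumr addrCA -big_split /=.
rewrite (_ : 0%:R = 0 :> K) // subr0 mul1r; congr (_ + _).
  by rewrite scale1r; congr (_ *: Y _ u v); lia.
apply: eq_bigr => i _; rewrite bump0.
rewrite (_ : (i.+1)%:Z - e%:Z - 1 = i%:Z - e%:Z); last by lia.
rewrite (_ : (i.+1)%:Z - (e.+1)%:Z = i%:Z - e%:Z); last by lia.
rewrite !scalerA -scalerDl.
congr (_ *: _).
rewrite binzS.
rewrite addrK; have := hc i; move: (binz K N i) => b hi.
rewrite !rmorphD /=. field. by rewrite addrC natr1.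
Qed.

Local Notation Os := (Oset Y omega trunc).

Lemma Os_circ n w u v : hom w u -> Os n (res (w + n%:Z) (n + n).+2 u v).
Proof. by move=> hu; apply: lspan_gen; left; exists w, u, v. Qed.

Lemma Os_L n x : Os n (L (-1) x + L 0 x).
Proof. by apply: lspan_gen; right; exists x. Qed.

Lemma OsA n w u v : hom w u -> Os n (res (w + n%:Z + 1) (n + n).+3 u v).
Proof.
move=> hu.
have h1 := Os_circ n v (homLN1 hu).
rewrite (_ : w + 1 + n%:Z = w + n%:Z + 1) in h1; last by ring.
rewrite res_deriv in h1.
have h2 := Os_circ n v hu.
have -> : res (w + n%:Z + 1) (n + n).+3 u v =
  ((n + n).+2%:R)^-1 *: ((- (w + n%:Z + 1)%:~R *: res (w + n%:Z) (n + n).+2 u v +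
     (n + n).+2%:R *: res (w + n%:Z + 1) (n + n).+3 u v)
   + (w + n%:Z + 1)%:~R *: res (w + n%:Z) (n + n).+2 u v).
  by rewrite [_ + _ + (_ *: _)]addrAC scaleNr addNr add0r scalerA mulVf ?scale1r //; apply: hc.
by apply: lspanZ; apply: lspanD => //; apply: lspanZ.
Qed.

Lemma OsB n w u v : hom w u -> Os n (res (w + n%:Z) (n + n).+3 u v).
Proof.
move=> hu; have := OsA n v hu; rewrite res_pascal => h.
rewrite (_ : res (w + n%:Z) (n + n).+3 u v =
  (res (w + n%:Z) (n + n).+3 u v + res (w + n%:Z) (n + n).+2 u v) - res (w + n%:Z) (n + n).+2 u v).
  by apply: lspanB => //; apply: Os_circ.
by rewrite addrK.
Qed.

Lemma OsC n w u v : hom w u -> Os n (res (w + n%:Z + 1) (n + n).+4 u v).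
Proof.
move=> hu.
have h1 := OsB n v (homLN1 hu).
rewrite (_ : w + 1 + n%:Z = w + n%:Z + 1) in h1; last by ring.
rewrite res_deriv in h1.
have h2 := OsB n v hu.
have -> : res (w + n%:Z + 1) (n + n).+4 u v =
  ((n + n).+3%:R)^-1 *: ((- (w + n%:Z + 1)%:~R *: res (w + n%:Z) (n + n).+3 u v +
     (n + n).+3%:R *: res (w + n%:Z + 1) (n + n).+4 u v)
   + (w + n%:Z + 1)%:~R *: res (w + n%:Z) (n + n).+3 u v).
  by rewrite [_ + _ + (_ *: _)]addrAC scaleNr addNr add0r scalerA mulVf ?scale1r //; apply: hc.
by apply: lspanZ; apply: lspanD => //; apply: lspanZ.
Qed.


Lemma skew u v p : (-1) ^ p *: Y p v u =
  - \sum_(i < trunc u v + `|p|) (-1) ^+ i *: Y (-1 - i%:Z) (Y (p + i%:Z) u v) vac.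
Proof.
have J := voa_jacobi HV p (-1) 0 u v vac.
rewrite [X in _ = X - _]big1 in J; last first.
  by move=> i _; rewrite add0r (voa_creation0 HV) Yr0 scaler0.
rewrite (_ : (trunc u vac + absz (-1)%R)%N = (trunc u vac).+1) ?addn1 // in J.
rewrite [X in _ = _ - X]big_ord_recl [X in _ = _ - (_ + X)]big1 in J; last first.
  move=> i _; rewrite /= ?bump0 ?lift0 (_ : -1 + (i.+1)%:Z = i%:Z); last by lia.
  by rewrite (voa_creation0 HV) Yr0 scaler0.
rewrite /= binz0 expr0 !mul1r addr0 sub0r in J.
rewrite (voa_creation HV) addr0 in J.
rewrite (_ : p + 0 - 0%:Z = p) in J; last by lia.
transitivity (- - ((-1) ^ p *: Y p v u)); first by rewrite opprK.
congr (- _); rewrite -J; apply: eq_bigr => i _.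
by rewrite binz_neg1 //; exact: hc.
Qed.


Definition Ds := lspan (fun y : V => exists x, y = L (-1) x + L 0 x).

Lemma Ds_Os n y : Ds y -> Os n y.
Proof. by apply: lspan_mono => z [x ->]; right; exists x. Qed.

Lemma Dvac i : forall x k, hom k x -> Ds (Y (-1 - i%:Z) x vac - binz K (-k) i *: x).
Proof.
elim: i => [|i IH] x k hx.
  rewrite (_ : -1 - 0%:Z = -1) ?(voa_creation HV) ?binz0 ?scale1r ?subrr; last by lia.
  exact: lspan0.
have IH' := IH _ _ (homLN1 hx).
have Eder : Y (-1 - i%:Z) (L (-1) x) vac = (i.+1)%:R *: Y (-1 - (i.+1)%:Z) x vac.
  rewrite (voa_deriv HV) -scaleNr; congr (_ *: Y _ _ _); last by lia.
  by rewrite -[in RHS]addn1 natrD rmorphB /=; ring.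
rewrite Eder in IH'.
have hL : Ds (L (-1) x + L 0 x) by apply: lspan_gen; exists x.
have -> : Y (-1 - (i.+1)%:Z) x vac - binz K (- k) i.+1 *: x =
   ((i.+1)%:R)^-1 *: ((i.+1)%:R *: Y (-1 - (i.+1)%:Z) x vac - binz K (- (k + 1)) i *: L (-1) x)
   + (((i.+1)%:R)^-1 * binz K (- (k + 1)) i) *: (L (-1) x + L 0 x).
  rewrite hx scalerBr !scalerA scalerDr scalerA addrA subrK mulVf ?scale1r; last exact: hc.
  congr (_ + _); rewrite -scaleNr; congr (_ *: _).
  rewrite binzS (_ : - (k + 1) = - k - 1 :> int); last by rewrite opprD.
  have := hc i; move: (binz K (- k - 1) i) => b hi.
  rewrite rmorphN /=; field. by rewrite addrC natr1.
by rewrite /Ds; apply: lspanD; apply: lspanZ.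
Qed.


Lemma sgnz (j e : nat) : (-1 : K) ^ (j%:Z - e%:Z) = (-1) ^+ (j + e).
Proof.
rewrite expfzDr ?oppr_eq0 ?oner_eq0 // -exprnP -exprnN invr_sign.
by rewrite -exprD.
Qed.

Lemma sgn2 (k : nat) : (-1) ^+ k * (-1) ^+ k = 1 :> K.
Proof. by rewrite -exprD addnn -mul2n exprM sqrrN !expr1n. Qed.

Lemma DsZ a y : Ds y -> Ds (a *: y).
Proof. exact: lspanZ. Qed.
Lemma DsD y z : Ds y -> Ds z -> Ds (y + z).
Proof. exact: lspanD. Qed.
Lemma DsB y z : Ds y -> Ds z -> Ds (y - z).
Proof. exact: lspanB. Qed.

Lemma skew_mode a b u v (j e T : nat) : hom a u -> hom b v ->
  (trunc u v + e <= T)%N ->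
  Ds (Y (j%:Z - e%:Z) v u - (- (-1) ^+ (j + e)) *:
      \sum_(i < T) binz K (a + b + e%:Z - 2 - j%:Z) i *: Y (j%:Z - e%:Z + i%:Z) u v).
Proof.
move=> hu hv hT.
set p := j%:Z - e%:Z.
have Sk := skew u v p.
rewrite /p sgnz in Sk.
have EY : Y p v u = - (-1) ^+ (j + e) *:
   \sum_(i < trunc u v + `|p|) (-1) ^+ i *: Y (-1 - i%:Z) (Y (p + i%:Z) u v) vac.
  by rewrite scaleNr -scalerN -Sk scalerA sgn2 scale1r.
rewrite EY -scalerBr; apply: DsZ.
set W' := \sum_(i < trunc u v + `|p|) binz K (a + b + e%:Z - 2 - j%:Z) i *: Y (p + i%:Z) u v.
have -> : \sum_(i < T) binz K (a + b + e%:Z - 2 - j%:Z) i *: Y (j%:Z - e%:Z + i%:Z) u v = W'.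
  rewrite /W' (@sum_ext2 _ _ (fun i : nat => binz K (a + b + e%:Z - 2 - j%:Z) i *: Y (p + i%:Z) u v)
    (trunc u v + e - j)%N T (trunc u v + `|p|)); first by [].
  - by rewrite /p; case: (j%:Z - e%:Z) => [q|q] /=; lia.
  - by lia.
  by move=> i hi; rewrite ztrunc ?scaler0 // /p; lia.
rewrite /W' -sumrB; apply: lspan_sum => i.
rewrite (_ : binz K (a + b + e%:Z - 2 - j%:Z) i = (-1) ^+ i * binz K (- (a + b - (p + i%:Z) - 1)) i).
  by rewrite -scalerA -scalerBr; apply: DsZ; apply: Dvac; apply: homog_Y.
rewrite (_ : - (a + b - (p + i%:Z) - 1) = - ((a + b - p - 1) - i%:Z)); last by ring.
rewrite binz_upper_neg; last exact: hc.
by congr (binz K _ i); rewrite /p; ring.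
Qed.


Lemma skew_res a b u v B e : hom a u -> hom b v ->
  Ds (res B e v u - (-1) ^+ e.+1 *: res (a + b + e%:Z - 2 - B) e u v).
Proof.
move=> hu hv.
set N := a + b + e%:Z - 2.
set T := (trunc u v + trunc v u + e)%N.
rewrite (@res_ext B e v u T); last by rewrite /T; lia.
set S := fun j : nat => \sum_(i < T) binz K (N - j%:Z) i *: Y (j%:Z - e%:Z + i%:Z) u v.
have H1 : Ds (\sum_(j < T) binz K B j *: Y (j%:Z - e%:Z) v u -
              \sum_(j < T) binz K B j *: ((- (-1) ^+ (j + e)) *: S j)).
  rewrite -sumrB; apply: lspan_sum => j; rewrite -scalerBr; apply: DsZ.
  by apply: skew_mode => //; rewrite /T; lia.
suff E : \sum_(j < T) binz K B j *: ((- (-1) ^+ (j + e)) *: S j) =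
          (-1) ^+ e.+1 *: res (N - B) e u v by rewrite -E.
rewrite (@res_ext (N - B) e u v T); last by rewrite /T; lia.
pose F := fun j i : nat => (binz K B j * (- (-1) ^+ (j + e)) * binz K (N - j%:Z) i) *:
   Y ((j + i)%N%:Z - e%:Z) u v.
rewrite (eq_bigr (fun j : 'I_T => \sum_(i < T - j) F j i)); last first.
  move=> j _; rewrite /S scalerA scaler_sumr.
  rewrite (@sum_ext _ _ (F j) (T - j) T).
  - apply: eq_bigr => i _; rewrite scalerA /F; congr (_ *: Y _ u v); lia.
  - by rewrite leq_subr.
  - move=> i hi; rewrite /F ztrunc ?scaler0 //; move: hi; rewrite /T; lia.
rewrite -triangle scaler_sumr; apply: eq_bigr => s _.
rewrite (eq_bigr (fun j : 'I_s.+1 => (binz K B j * (- (-1) ^+ (j + e)) * binz K (N - j%:Z) (s - j)) *: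
   Y (s%:Z - e%:Z) u v)); last first.
  by move=> j _; rewrite /F; congr (_ *: Y _ u v); have := ltn_ord j; lia.
rewrite -scaler_suml scalerA; congr (_ *: _).
rewrite -(vand hc) /vf mulr_sumr; apply: eq_bigr => j _.
rewrite exprD exprS; ring.
Qed.


Lemma res_addr N e u x y : res N e u (x + y) = res N e u x + res N e u y.
Proof.
set M := (trunc u x + trunc u y + trunc u (x + y) + e)%N.
rewrite !(@res_ext N e _ _ M) ?/M; try lia.
by rewrite -big_split; apply: eq_bigr => j _; rewrite YrD scalerDr.
Qed.

Lemma res_0r N e u : res N e u 0 = 0.
Proof.
by rewrite /Defs.res big1 // => j _; rewrite Yr0 scaler0.
Qed.

Lemma res_sumr N e u (s : seq (int * V)) :
  res N e u (\sum_(p <- s) p.2) = \sum_(p <- s) res N e u p.2.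
Proof.
elim: s => [|p s IH]; first by rewrite !big_nil res_0r.
by rewrite !big_cons res_addr IH.
Qed.

Lemma star_eq n wt u v : star Y trunc n.+1 0 n.+1 wt u v = res (wt + n%:Z + 1) (n + n).+3 u v.
Proof.
rewrite /star big_ord1 /= binz0 expr0 mul1r scale1r.
congr (res _ _ u v); first by rewrite -addn1 PoszD addrA.
by lia.
Qed.

Lemma circ_eq n wt u v : circ Y trunc n.+1 n.+1 wt u v = res (wt + n%:Z + 1) (n + n).+4 u v.
Proof.
rewrite /circ; congr (res _ _ u v); first by rewrite -addn1 PoszD addrA.
by lia.
Qed.

End VOA.

Unset Implicit Arguments.

Theorem lemma5p1 (K : fieldType) (V : lmodType K) (Y : int -> V -> V -> V)
    (vac omega : V) (c : K) (trunc : V -> V -> nat)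
    (HV : is_VOA Y vac omega c trunc) (m : nat) (Hm : (0 < m)%N) :
  forall x : V,
    lspan (fun y => (exists (wt : int) (u v : V),
                      homog Y omega wt u /\ y = star Y trunc m 0 m wt u v)
                   \/ Oset Y omega trunc m y) x
    <-> Oset Y omega trunc m.-1 x.
Proof.
case: m Hm => [//|n] _ /= x; split.
  apply: lspan_idem => y [[wt [u [v [hu ->]]]]|hy].
    by rewrite star_eq; apply: (OsA HV).
  apply: lspan_idem hy => z [[wt [u [v [hu ->]]]]|[w ->]].
    by rewrite circ_eq; apply: (OsC HV).
  exact: Os_L.
apply: lspan_idem => z [[wt [u [v [hu ->]]]]|[w ->]]; last first.
  by apply: lspan_gen; right; apply: Os_L.
rewrite /circ.
have [s [hs ->]] := voa_graded HV v.
rewrite (res_sumr HV); apply: lspan_sum_in => p /hs hp.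
move: (p.1) (p.2) hp => bb w hw.
set e := (n + n).+3.
have hD := skew_res HV (bb + n%:Z + 1) e hu hw.
rewrite (_ : wt + bb + e%:Z - 2 - (bb + n%:Z + 1) = wt + n%:Z) in hD; last by rewrite /e; lia.
rewrite (_ : (-1) ^+ e.+1 = 1 :> K) ?scale1r in hD; last first.
  by rewrite (_ : e.+1 = 2 * n.+2)%N ?exprM ?sqrrN ?expr1n // /e; lia.
have -> : res Y trunc (wt + n%:Z) (n + n).+2 u w =
  res Y trunc (wt + n%:Z + 1) e u w - res Y trunc (bb + n%:Z + 1) e w u
  + (res Y trunc (bb + n%:Z + 1) e w u - res Y trunc (wt + n%:Z) e u w).
  by rewrite /e (res_pascal HV) [RHS]addrA subrK [RHS]addrC addKr.
apply: lspanD; last first.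
  by apply: lspan_gen; right; apply: Ds_Os hD.
apply: lspanB; apply: lspan_gen; left.
  by exists wt, u, w; split => //; rewrite star_eq.
by exists bb, w, u; split => //; rewrite star_eq.
Qed.
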